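(* Let $H(r)$ and $h(r)$ be nonnegative continuous functions on $(0,1]$, let $\kappa\in(0,1/4)$, $C_0\ge1$, $\gamma\ge0$ and $\theta\in(0,1/8)$. Assume that for every $r\in[\kappa,1/2]$, $$\max_{r\le t\le2r}H(t)\le C_0H(2r),\qquad\max_{r\le t,s\le2r}|h(t)-h(s)|\le C_0H(2r),$$ $$H(\theta r)\le\tfrac12H(r)+C_0\big(\omega_1(\kappa/r)+\omega_2(r)+\gamma\big)\{H(2r)+h(2r)\},$$ where $\omega_1,\omega_2$ are nonnegative nondecreasing functions on $[0,1]$ with $\omega_i(0)=0$ and $\int_0^1\frac{\omega_i(s)}{s}ds<\infty$. Then there is $c_0>0$, depending only on $C_0$ (decreasingly), such that if $\gamma\le c_0|\log\kappa|^{-1}$, then $$\max_{\kappa\le r\le1}\{H(r)+h(r)\}\le C\{H(1)+h(1)\},$$ where $C$ depends only on $C_0,\theta,\omega_1,\omega_2$. *)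

(* Defs.v *)
From HB Require Import structures.
From mathcomp Require Import all_boot all_order all_algebra.
From mathcomp Require Import all_classical all_reals all_analysis.
Set Implicit Arguments. Unset Strict Implicit. Unset Printing Implicit Defensive.
Import Order.TTheory GRing.Theory Num.Theory.
Import numFieldNormedType.Exports.
Local Open Scope classical_set_scope.
Local Open Scope ring_scope.

Definition admissible_modulus (R : realType) (w : R -> R) : Prop :=
  [/\ (forall x, 0 <= x <= 1 -> 0 <= w x),
      (forall x y, 0 <= x -> x <= y -> y <= 1 -> w x <= w y),
      w 0 = 0 &
      (\int[@lebesgue_measure R]_(s in [set` `]0%R, 1%R]]) (w s / s)%:E < +oo)%E].

(* Main.v *)
Require Import Defs.
From HB Require Import structures.
From mathcomp Require Import all_boot all_order all_algebra.
From mathcomp Require Import all_classical all_reals all_analysis.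
From mathcomp Require Import ring lra measurable_realfun.
Import Order.TTheory GRing.Theory Num.Theory.
Import numFieldNormedType.Exports.
Local Open Scope classical_set_scope.
Local Open Scope ring_scope.

Section Mod.
Variable R : realType.

Lemma meas_wdiv (w : R -> R) :
  (forall x y, 0 <= x -> x <= y -> y <= 1 -> w x <= w y) ->
  measurable_fun ([set` `]0%R, 1%R]] : set R) (EFin \o (fun s => w s / s)).
Proof.
move=> wnd; apply/measurable_EFinP.
have mD : measurable ([set` `]0%R, 1%R]] : set R) by exact: measurable_itv.
apply: measurable_funM.
  pose w' := fun x => w (Num.max 0 (Num.min x 1)).
  have nd : {homo w' : x y / x <= y}.
    move=> x y xy; rewrite /w'; apply: wnd.
    - by rewrite le_max lexx.
    - by rewrite le_max2 // le_min2.
    - by rewrite ge_max ler01 ge_min lexx orbT.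
  move: (nondecreasing_measurable mD nd) => mw'.
  apply: (eq_measurable_fun w' _ mw').
  move=> x; rewrite inE /= in_itv /= => /andP[x0 x1].
  rewrite /w'; congr w.
  by rewrite (min_idPl x1) (max_idPr (ltW x0)).
apply: (measurable_funS (E := ([set` `]0%R, +oo[] : set R))).
- exact: measurable_itv.
- by move=> x /=; rewrite !in_itv /= => /andP[-> _].
apply: open_continuous_measurable_fun; first exact: interval_open.
move=> x; rewrite inE /= in_itv /= andbT => x0.
by apply: inv_continuous; rewrite gt_eqF.
Qed.

Lemma mod_sum (w : R -> R) (th : R) : admissible_modulus w -> 0 < th < 1 ->
  exists S, forall n, \sum_(i < n) w (th ^+ i) <= S.
Proof.
case=> w0 wnd _ wint /andP[t0 t1].
pose D := ([set` `]0%R, 1%R]] : set R).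
have mD : measurable D by exact: measurable_itv.
have mf := meas_wdiv _ wnd.
have f0 : forall x, D x -> (0 <= (w x / x)%:E)%E.
  move=> x; rewrite /D /= in_itv /= => /andP[x0 x1].
  by rewrite lee_fin divr_ge0 ?w0 ?(ltW x0) ?x1.
have pn n : 0 < th ^+ n by rewrite exprn_gt0.
have le1 n : th ^+ n <= 1 by rewrite exprn_ile1 // ltW.
have key : forall n, (((1 - th) * \sum_(j < n) w (th ^+ j.+1))%:E <=
    \int[@lebesgue_measure R]_(s in ([set` `](th ^+ n)%R, 1%R]] : set R)) (w s / s)%:E)%E.
  elim=> [|n IH].
    rewrite big_ord0 mulr0; apply: integral_ge0 => x /=.
    rewrite in_itv /= expr0 => /andP[x1 x2].
    by rewrite lee_fin divr_ge0 ?w0 ?x2 // ltW // (lt_trans ltr01 x1).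
  pose A := ([set` `]th ^+ n.+1, th ^+ n]] : set R).
  pose B := ([set` `]th ^+ n, 1%R]] : set R).
  have AB : ([set` `]th ^+ n.+1, 1%R]] : set R) = A `|` B.
    apply/seteqP; split => x /=; rewrite !in_itv /=.
      move=> /andP[x1 x2]; case: (leP x (th ^+ n)) => xn.
        by left; rewrite /A /= in_itv /= x1 xn.
      by right; rewrite /B /= in_itv /= xn x2.
    rewrite /A /B /= !in_itv /=.
    case=> /andP[x1 x2].
      by rewrite x1 /= (le_trans x2 (le1 n)).
    by rewrite x2 andbT; apply: le_lt_trans x1; rewrite exprSr ger_pMr // ltW.
  have ltn1 : th ^+ n.+1 < th ^+ n by rewrite exprSr gtr_pMr.
  have ADs : A `|` B `<=` D.
    move=> x [] /=; rewrite /A /B /D /= !in_itv /= => /andP[x1 x2].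
      by rewrite (lt_trans (pn _) x1) (le_trans x2 (le1 n)).
    by rewrite (lt_trans (pn _) x1) x2.
  rewrite AB ge0_integral_setU //; first last.
  - rewrite disj_set2E; apply/eqP/seteqP; split => x //=.
    by rewrite /A /B /= !in_itv /= => -[/andP[_ x2] /andP[x3 _]]; move: (lt_le_trans x3 x2); rewrite ltxx.
  - by move=> x /ADs; exact: f0.
  - exact: measurable_funS mf.
  - exact: measurable_itv.
  - exact: measurable_itv.
  rewrite big_ord_recr /= mulrDr EFinD addeC leeD //.
  have -> : (1 - th) * w (th ^+ n.+1) = (w (th ^+ n.+1) / th ^+ n) * (th ^+ n - th ^+ n.+1).
    by rewrite exprSr; field; rewrite gt_eqF.
  have c0 : 0 <= w (th ^+ n.+1) / th ^+ n by rewrite divr_ge0 ?w0 ?le1 ?ltW ?pn.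
  have mA : measurable A by exact: measurable_itv.
  have -> : ((w (th ^+ n.+1) / th ^+ n) * (th ^+ n - th ^+ n.+1))%:E =
     (\int[@lebesgue_measure R]_(x in A) (cst (w (th ^+ n.+1) / th ^+ n)%:E) x)%E.
    rewrite integral_cst //.
    rewrite /A; have := @lebesgue_measure_itv R `](th ^+ n.+1), (th ^+ n)]; rewrite /= lte_fin ltn1 => ->; by rewrite -EFinD -EFinM.
  apply: ge0_le_integral => //.
  - apply: measurable_funS mf => //; first by move=> x Ax; apply: ADs; left.
  - move=> x; rewrite /A /= in_itv /= => /andP[x1 x2].
    have xp : 0 < x by exact: lt_trans (pn _) x1.
    rewrite lee_fin; apply: ler_pM.
    - by apply: w0; rewrite ltW ?pn ?le1.
    - by rewrite invr_ge0 ltW ?pn.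
    - by apply: wnd; rewrite ?(ltW x1) ?(ltW (pn _)) ?(le_trans x2 (le1 n)).
    - by rewrite lef_pV2 // posrE ?pn.
pose I := (\int[@lebesgue_measure R]_(s in D) (w s / s)%:E)%E.
have Ile n : (((1 - th) * \sum_(j < n) w (th ^+ j.+1))%:E <= I)%E.
  apply: (le_trans (key n)); apply: ge0_subset_integral => //.
  - by move=> x; rewrite /D /= !in_itv /= => /andP[x1 ->]; rewrite (lt_trans (pn n) x1).
have I0 : (0 <= I)%E by apply: integral_ge0.
have Ifin : I = (fine I)%:E by rewrite fineK // ge0_fin_numE.
exists (w 1 + fine I / (1 - th)) => n.
have s0 : 0 <= \sum_(j < n) w (th ^+ j.+1).
  by apply: sumr_ge0 => j _; apply: w0; rewrite ltW ?pn ?le1.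
apply: (@le_trans _ _ (\sum_(i < n.+1) w (th ^+ i))).
  by rewrite big_ord_recr /= lerDl; apply: w0; rewrite ltW ?pn ?le1.
rewrite big_ord_recl /= expr0 lerD2l.
have := Ile n; rewrite Ifin lee_fin => h.
rewrite ler_pdivlMr ?subr_gt0 // mulrC //.
Qed.
End Mod.

Lemma aux1 (R : realType) (x y : R) : 0 <= x -> y <= 1 -> x * y <= x.
Proof. move=> *; nra. Qed.
Lemma aux2 (R : realType) (p t : R) : 0 < p -> p <= 1 -> 0 < t -> t < 1 / 8 -> p * t <= 1 / 2.
Proof. move=> *; nra. Qed.
Lemma aux3 (R : realType) (B th t P : R) : 0 < B -> 1 <= th * P -> B * th * P <= t * P -> B <= t * P.
Proof. move=> *; nra. Qed.

Lemma comb (R : realType) (a a' b E co Hr H2 h2 Ht : R) : 0 <= co -> co <= E ->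
  0 <= H2 -> 0 <= h2 -> H2 <= a + a' -> h2 <= b -> Hr <= a ->
  Ht <= 1 / 2 * Hr + co * (H2 + h2) -> Ht <= a / 2 + E * (a + a' + b).
Proof.
move=> c0 cE H0 h0 H2a h2b Hra HHt.
have := ler_pM c0 (addr_ge0 H0 h0) cE (lerD H2a h2b) => pr; lra.
Qed.

Lemma vstep (R : realType) (cc E a a' b : R) : 1 <= cc -> 0 <= E -> 0 <= a -> 0 <= a' -> 0 <= b ->
  (b + cc * (a / 2 + E * (a + a' + b) + a)) + 5 * cc * (a / 2 + E * (a + a' + b)) + cc * a
  <= (b + 5 * cc * a + cc * a') * (1 + 18 * cc * E).
Proof.
move=> c1 E0 a0 a'0 b0.
have ccE : 0 <= cc * E by apply: mulr_ge0 => //; lra.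
have f1 : 0 <= (cc - 1) * a by apply: mulr_ge0; lra.
have f2 : 0 <= (cc - 1) * a' by apply: mulr_ge0; lra.
have s3 : a + a' + b <= 3 * (b + 5 * cc * a + cc * a') by lra.
have f3 : cc * E * (a + a' + b) <= cc * E * (3 * (b + 5 * cc * a + cc * a')) by apply: ler_wpM2l.
have f4 : 0 <= cc * a' by apply: mulr_ge0 => //; lra.
lra.
Qed.

Lemma geo_small (R : realType) (th t : R) : 0 < th -> 2 * th <= 1 -> 0 < t ->
  exists n, th ^+ n <= t.
Proof.
move=> t0 t2 tp.
have h0 : 0 <= t^-1 by rewrite invr_ge0 ltW.
have := archi_boundP h0.
set N := Num.Def.archi_bound _ => hN.
exists N.
have h1 : (th * 2) ^+ N <= 1.
  apply: exprn_ile1; first by apply: mulr_ge0; rewrite ?ltW.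
  by rewrite mulrC.
have h2 : (N%:R : R) <= 2 ^+ N by rewrite -natrX ler_nat ltnW // ltn_expl.
rewrite exprMn in h1.
have p2 : 0 < (2 : R) ^+ N by rewrite exprn_gt0.
have h3 : t * t^-1 < t * N%:R by rewrite ltr_pM2l.
rewrite mulfV ?gt_eqF // in h3.
have h4 : t * N%:R <= t * 2 ^+ N by rewrite ler_pM2l.
have : th ^+ N * 2 ^+ N <= t * 2 ^+ N by lra.
by rewrite ler_pM2r.
Qed.

Section Main.
Variables (R : realType) (C0 th ka ga : R) (w1 w2 H h : R -> R).
Hypotheses (C01 : 1 <= C0) (th0 : 0 < th) (th8 : th < 1 / 8) (ka0 : 0 < ka) (ka4 : ka < 1 / 4).
Hypothesis Hh0 : forall x, 0 < x <= 1 -> 0 <= H x /\ 0 <= h x.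
Hypothesis hyp : forall r, ka <= r <= 1 / 2 ->
             [/\ (forall t, r <= t <= 2 * r -> H t <= C0 * H (2 * r)),
                 (forall t s, r <= t <= 2 * r -> r <= s <= 2 * r ->
                     `|h t - h s| <= C0 * H (2 * r)) &
                 H (th * r) <= 1 / 2 * H r +
                   C0 * (w1 (ka / r) + w2 r + ga) * (H (2 * r) + h (2 * r))].

Lemma R1 t : ka <= t -> t <= 1 / 2 -> H t <= C0 * H (2 * t) /\ h t <= h (2 * t) + C0 * H (2 * t).
Proof.
move=> kt t2; have t0 : 0 < t by exact: lt_le_trans kt.
have [h1 h2 _] := hyp t ltac:(by rewrite kt t2).
have tt : t <= t <= 2 * t by rewrite lexx /=; lra.
have t2t : t <= 2 * t <= 2 * t by rewrite lexx andbT; lra.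
split; first exact: h1.
have := h2 _ _ tt t2t => /(le_trans (ler_norm _)) => ?; lra.
Qed.

Lemma Rhalf t : 1 / 2 <= t -> t <= 1 -> ka <= 1 / 2 ->
  H t <= C0 * H 1 /\ h t <= h 1 + C0 * H 1.
Proof.
move=> t2 t1 k2.
have [h1 h2 _] := hyp (1 / 2) ltac:(by rewrite k2 lexx).
have e : 2 * (1 / 2) = 1 :> R by field.
have tt : 1 / 2 <= t <= 2 * (1 / 2) by apply/andP; split; lra.
have t2t : 1 / 2 <= (1 : R) <= 2 * (1 / 2) by apply/andP; split; lra.
split; first by have := h1 _ tt; rewrite e.
have := h2 _ _ tt t2t; rewrite e => /(le_trans (ler_norm _)) => ?; lra.
Qed.

Lemma crude i : forall t, ka <= t -> t <= 1 -> 1 <= t * 2 ^+ i ->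
  H t <= C0 ^+ i * H 1 /\ h t <= h 1 + i%:R * C0 ^+ i * H 1.
Proof.
have [H10 h10] := Hh0 1 ltac:(by rewrite ltr01 lexx).
elim: i => [|i IH] t kt t1 ti.
  rewrite expr0 mulr1 in ti; have -> : t = 1 by apply/eqP; rewrite eq_le t1 ti.
  by rewrite expr0 mul1r mul0r mul0r addr0.
have P1 : 1 <= C0 ^+ i by rewrite exprn_ege1.
have C00 : 0 <= C0 by have := C01; lra.
have PH : 0 <= C0 ^+ i * H 1 by apply: mulr_ge0 => //; exact: le_trans ler01 P1.
have eS : C0 ^+ i.+1 = C0 * C0 ^+ i by rewrite exprS.
have eN : (i.+1)%:R = i%:R + 1 :> R by rewrite -natr1.
have i0 : 0 <= i%:R :> R by rewrite ler0n.
rewrite eS eN.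
case: (leP t (1 / 2)) => th2.
  have k2 : ka <= 2 * t by have := lt_le_trans ka0 kt; lra.
  have [a1 a2] := R1 t kt th2.
  have [b1 b2] := IH (2 * t) k2 ltac:(lra) ltac:(by rewrite exprS mulrA [t * 2]mulrC in ti).
  have f1 : 0 <= C0 * (C0 ^+ i * H 1 - H (2 * t)) by apply: mulr_ge0; rewrite ?subr_ge0.
  have f2 : 0 <= (C0 - 1) * (i%:R * (C0 ^+ i * H 1)) by apply: mulr_ge0; [rewrite subr_ge0|apply: mulr_ge0].
  split; lra.
have [a1 a2] := Rhalf t (ltW th2) t1 ltac:(have := ka4; lra).
have f1 : 0 <= (C0 ^+ i - 1) * (C0 * H 1) by apply: mulr_ge0; [rewrite subr_ge0|apply: mulr_ge0].
have f2 : 0 <= i%:R * (C0 * (C0 ^+ i * H 1)) by apply: mulr_ge0 => //; apply: mulr_ge0.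
split; lra.
Qed.

Lemma chain i B be al L : 2 * B <= 1 -> 0 <= al ->
  (forall u, B <= u -> u <= 2 * B -> h u <= be) ->
  (forall u, ka <= u -> L <= u -> u <= 2 * B -> H u <= al) ->
  forall t, ka <= t -> L <= t -> t <= 2 * B -> B <= t * 2 ^+ i ->
  h t <= be + i%:R * C0 * al.
Proof.
move=> B1 al0 hb Hb; elim: i => [|i IH] t kt Lt tB ti.
  by rewrite mul0r mul0r addr0; apply: hb => //; rewrite expr0 mulr1 in ti.
have i0 : 0 <= i%:R :> R by rewrite ler0n.
have eN : (i.+1)%:R = i%:R + 1 :> R by rewrite -natr1.
rewrite eN.
have C00 : 0 <= C0 by have := C01; lra.
have f : 0 <= i%:R * C0 * al by apply: mulr_ge0 => //; apply: mulr_ge0.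
have f' : 0 <= C0 * al by apply: mulr_ge0.
case: (leP B t) => Bt.
  have := hb _ Bt tB; lra.
have t0 : 0 < t by exact: lt_le_trans kt.
have [a1 a2] := R1 t kt ltac:(lra).
have b1 := IH (2 * t) ltac:(lra) ltac:(lra) ltac:(lra) ltac:(by rewrite exprS mulrA [t * 2]mulrC in ti).
have b2 := Hb (2 * t) ltac:(lra) ltac:(lra) ltac:(lra).
have f2 : 0 <= C0 * (al - H (2 * t)) by apply: mulr_ge0; rewrite ?subr_ge0.
lra.
Qed.

Hypothesis ga0 : 0 <= ga.
Hypotheses (w10 : forall x, 0 <= x <= 1 -> 0 <= w1 x)
  (w1nd : forall x y, 0 <= x -> x <= y -> y <= 1 -> w1 x <= w1 y)
  (w20 : forall x, 0 <= x <= 1 -> 0 <= w2 x)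
  (w2nd : forall x y, 0 <= x -> x <= y -> y <= 1 -> w2 x <= w2 y).
Variable m : nat.
Hypothesis hm : 1 <= th * 2 ^+ m.

Definition cc := m%:R * C0.
Definition Dp := (1 + (2 * m)%:R) * C0 ^+ (2 * m).
Definition AA := H 1 + h 1.
Definition EE j := C0 * (w1 (ka / th ^+ j.+2) + w2 (th ^+ j.+1) + ga).
Definition KK := (1 + 6 * cc) * Dp * AA.

Lemma thfacts : [/\ forall n, 0 < th ^+ n, forall n, th ^+ n <= 1,
  forall n, th ^+ n.+1 <= th ^+ n & forall n, 2 * th ^+ n.+1 <= th ^+ n].
Proof.
have t0 := th0; have t8 := th8.
have pn n : 0 < th ^+ n by rewrite exprn_gt0.
have le1 n : th ^+ n <= 1 by rewrite exprn_ile1 // ltW //; lra.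
split => // n; rewrite exprSr.
  have := pn n; nra.
have := pn n; nra.
Qed.

Lemma cc1 : 1 <= cc.
Proof.
have t0 := th0; have t8 := th8; have h1 := hm; have c1 := C01.
have m1 : 1 <= m%:R :> R.
  case: m h1 => [|n] h1; last by rewrite ler1n.
  by move: h1; rewrite expr0 mulr1 => ?; lra.
rewrite /cc; nra.
Qed.

Lemma claim k : (k == 0)%N || (ka <= th ^+ k.+1) -> exists a a' b,
  [/\ [/\ 0 <= a, 0 <= a' & 0 <= b],
   (forall t, ka <= t -> th ^+ k.+2 <= t -> t <= th ^+ k.+1 -> H t <= a),
   (forall t, ka <= t -> th ^+ k.+1 <= t -> t <= th ^+ k -> H t <= a'),
   (forall t, ka <= t -> th ^+ k.+2 <= t -> t <= 1 -> h t <= b) &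
   b + 5 * cc * a + cc * a' <= KK * expR (18 * cc * \sum_(j < k) EE j)].
Proof.
have [pn le1 dec dbl] := thfacts.
have c1 := cc1; have C1 := C01; have k0 := ka0; have t0 := th0; have t8 := th8.
have [H10 h10] := Hh0 1 ltac:(by rewrite ltr01 lexx).
have A0 : 0 <= AA by rewrite /AA; lra.
elim: k => [_|k IH].
  have P1 : 1 <= C0 ^+ (2 * m) by rewrite exprn_ege1.
  have n0 : 0 <= (2 * m)%:R :> R by rewrite ler0n.
  have D0 : 0 <= Dp by rewrite /Dp; apply: mulr_ge0; lra.
  have bnd t : ka <= t -> th ^+ 2 <= t -> t <= 1 -> H t <= Dp * AA /\ h t <= Dp * AA.
    move=> kt tt t1.
    have e : (2 : R) ^+ (2 * m) = 2 ^+ m * 2 ^+ m by rewrite mul2n -addnn exprD.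
    have p2 : 0 <= (2 : R) ^+ m by rewrite exprn_ge0.
    have ti : 1 <= t * 2 ^+ (2 * m).
      rewrite e; have := hm; rewrite expr2 in tt.
      have f : th * th * (2 ^+ m * 2 ^+ m) <= t * (2 ^+ m * 2 ^+ m).
        by apply: ler_wpM2r => //; apply: mulr_ge0.
      nra.
    have [a1 a2] := crude (2 * m) t kt t1 ti.
    have f1 : 0 <= (2 * m)%:R * (C0 ^+ (2 * m) * H 1) by apply: mulr_ge0 => //; apply: mulr_ge0 => //; lra.
    have f2 : 0 <= (1 + (2 * m)%:R) * C0 ^+ (2 * m) * h 1 by apply: mulr_ge0 => //; apply: mulr_ge0; lra.
    have f3 : 0 <= (C0 ^+ (2 * m) - 1) * h 1 by apply: mulr_ge0 => //; lra.
    have f4 : 0 <= (2 * m)%:R * (C0 ^+ (2 * m) * h 1) by apply: mulr_ge0 => //; apply: mulr_ge0 => //; lra.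
    have f5 : 0 <= C0 ^+ (2 * m) * H 1 by apply: mulr_ge0 => //; lra.
    rewrite /Dp /AA; split; lra.
  exists (Dp * AA), (Dp * AA), (Dp * AA).
  have DA : 0 <= Dp * AA by apply: mulr_ge0.
  split => //.
  - by move=> t kt t2 t1; apply: (bnd t kt t2 (le_trans t1 (le1 1))).1.
  - move=> t kt t1 t2; apply: (bnd t kt (le_trans (dec 1) t1) _).1.
    by rewrite expr0 in t2.
  - by move=> t kt t2 t1; apply: (bnd t kt t2 t1).2.
  - by rewrite big_ord0 mulr0 expR0 mulr1 /KK; lra.
move=> /= Hk.
have Hk1 : ka <= th ^+ k.+1 := le_trans Hk (dec _).
have [a [a' [b [[a0 a'0 b0] W1 W0 Hb V]]]] := IH (introT orP (or_intror Hk1)).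
have kB : 0 < th ^+ k.+2 := pn _.
have q1 : ka / th ^+ k.+2 <= 1 by rewrite ler_pdivrMr // mul1r.
have q0 : 0 <= ka / th ^+ k.+2 by rewrite divr_ge0 // ltW.
have E0 : 0 <= EE k.
  rewrite /EE; apply: mulr_ge0; first lra.
  have := w10 (ka / th ^+ k.+2) ltac:(by rewrite q0 q1).
  have := w20 (th ^+ k.+1) ltac:(by rewrite ltW ?pn ?le1).
  have := ga0; lra.
pose an := a / 2 + EE k * (a + a' + b).
have an0 : 0 <= an.
  rewrite /an; have : 0 <= EE k * (a + a' + b) by apply: mulr_ge0 => //; lra.
  lra.
have Wn : forall t, ka <= t -> th ^+ k.+3 <= t -> t <= th ^+ k.+2 -> H t <= an.
  move=> t kt t3 t2; have tp : 0 < t by exact: lt_le_trans kt.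
  pose r := t / th.
  have rt : t <= r by rewrite /r ler_pdivlMr //; apply: aux1; lra.
  have r1 : th ^+ k.+2 <= r by rewrite /r ler_pdivlMr // -exprSr.
  have r2 : r <= th ^+ k.+1 by rewrite /r ler_pdivrMr // -exprSr.
  have rp : 0 < r by exact: lt_le_trans tp rt.
  have r12 : r <= 1 / 2.
    apply: (le_trans r2); rewrite exprSr; exact: aux2.
  have kr : ka <= r by exact: le_trans kt rt.
  have [_ _ h3] := hyp r ltac:(by rewrite kr r12).
  have ethr : th * r = t by rewrite /r mulrC divfK // gt_eqF.
  rewrite ethr in h3.
  have Hr := W1 r kr r1 r2.
  have H2r : H (2 * r) <= a + a'.
    case: (leP (2 * r) (th ^+ k.+1)) => r3.
      by have := W1 (2 * r) ltac:(lra) ltac:(lra) r3; lra.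
    have := W0 (2 * r) ltac:(lra) (ltW r3) ltac:(have := dbl k; lra); lra.
  have h2r : h (2 * r) <= b.
    by apply: Hb; [lra|lra|have := dbl k; have := le1 k; lra].
  have [H2r0 h2r0] := Hh0 (2 * r) ltac:(apply/andP; split; [lra|have := dbl k; have := le1 k; lra]).
  have kr1 : ka / r <= ka / th ^+ k.+2.
    by rewrite ler_pM2l // lef_pV2 // posrE.
  have kr0 : 0 <= ka / r by rewrite divr_ge0 // ltW.
  have w1a := w1nd _ _ kr0 kr1 q1.
  have w1b := w10 (ka / r) ltac:(by rewrite kr0 (le_trans kr1 q1)).
  have w2a := w2nd _ _ (ltW rp) r2 (le1 _).
  have w2b := w20 r ltac:(by rewrite (ltW rp) (le_trans r2 (le1 _))).
  have co0 : 0 <= C0 * (w1 (ka / r) + w2 r + ga) by apply: mulr_ge0; have := ga0; lra.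
  have coE : C0 * (w1 (ka / r) + w2 r + ga) <= EE k.
    by rewrite /EE; apply: ler_wpM2l; [lra|have := ga0; lra].
  exact: comb co0 coE H2r0 h2r0 H2r h2r Hr h3.
pose bn := b + cc * (an + a).
have ca0 : 0 <= cc * (an + a) by apply: mulr_ge0; lra.
have Hbn : forall t, ka <= t -> th ^+ k.+3 <= t -> t <= 1 -> h t <= bn.
  move=> t kt t3 t1; rewrite /bn.
  case: (leP (th ^+ k.+2) t) => tB.
    by have := Hb t kt tB t1; lra.
  have B1 : 2 * th ^+ k.+2 <= 1 by have := dbl k.+1; have := le1 k.+1; lra.
  have := @chain m (th ^+ k.+2) b (an + a) (th ^+ k.+3) B1 ltac:(lra) _ _ t kt t3 ltac:(lra).
  rewrite /cc; apply.
  - move=> u Bu uB; apply: Hb => //; [exact: le_trans Hk Bu|lra].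
  - move=> u ku Lu uB; case: (leP u (th ^+ k.+2)) => u2.
      by have := Wn u ku Lu u2; lra.
    by have := W1 u ku (ltW u2) ltac:(have := dbl k.+1; lra); lra.
  - have := hm; rewrite exprSr in t3.
    have p2 : 0 <= (2 : R) ^+ m by rewrite exprn_ge0.
    have : th ^+ k.+2 * th * 2 ^+ m <= t * 2 ^+ m by rewrite ler_wpM2r.
    move=> h1 h2; exact: aux3 (pn _) h2 h1.
exists an, a, bn; split => //.
- rewrite /bn; split => //; lra.
have eS : 18 * cc * \sum_(j < k.+1) EE j = 18 * cc * \sum_(j < k) EE j + 18 * cc * EE k.
  by rewrite big_ord_recr /= mulrDr.
rewrite eS expRD mulrA.
have V00 : 0 <= b + 5 * cc * a + cc * a'.
  have : 0 <= cc * a by apply: mulr_ge0 => //; lra.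
  have : 0 <= cc * a' by apply: mulr_ge0 => //; lra.
  lra.
rewrite /bn /an; apply: (le_trans (@vstep _ _ _ _ _ _ c1 E0 a0 a'0 b0)).
apply: ler_pM => //.
  have : 0 <= 18 * cc * EE k by apply: mulr_ge0 => //; lra.
  lra.
exact: expR_ge1Dx.
Qed.

Variables S1 S2 : R.
Hypotheses (hS1 : forall n, \sum_(i < n) w1 (th ^+ i) <= S1)
  (hS2 : forall n, \sum_(i < n) w2 (th ^+ i) <= S2)
  (gab : ga <= 1 * `|ln ka|^-1).

Lemma sum_bound k : ka <= th ^+ k.+1 -> \sum_(j < k) EE j <= C0 * (S1 + S2 + 2).
Proof.
move=> hk.
have [pn le1 dec dbl] := thfacts.
have C1 := C01; have k0 := ka0; have t0 := th0; have t8 := th8; have g0 := ga0.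
rewrite /EE -mulr_sumr; apply: ler_wpM2l; first lra.
rewrite !big_split /=.
have s1 : \sum_(j < k) w1 (ka / th ^+ j.+2) <= S1.
  apply: le_trans (hS1 k).
  rewrite [X in _ <= X](reindex_inj rev_ord_inj) /=.
  apply: ler_sum => j _.
  have jk : (k - j.+1 + j.+2 = k.+1)%N by rewrite addnS subnK // ltn_ord.
  apply: w1nd.
  - by rewrite divr_ge0 // ltW.
  - by rewrite ler_pdivrMr // -exprD jk.
  - exact: le1.
have s2 : \sum_(j < k) w2 (th ^+ j.+1) <= S2.
  apply: le_trans (hS2 k.+1).
  rewrite big_ord_recl /= expr0.
  rewrite [X in _ <= _ + X](eq_bigr (fun j : 'I_k => w2 (th ^+ j.+1))); last by move=> i _; rewrite /bump /=.
  by rewrite lerDr; apply: w20; rewrite ler01 lexx.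
have s3 : \sum_(j < k) ga <= 2.
  rewrite sumr_const card_ord -mulr_natr.
  have lk : ln ka <= ln (th ^+ k.+1) by rewrite ler_ln ?posrE ?pn.
  rewrite lnXn // -mulr_natr in lk.
  have lt : ln th <= th - 1 by have := le_ln1Dx (x := th - 1) ltac:(lra); rewrite addrC subrK.
  have nk : 0 <= k%:R :> R by rewrite ler0n.
  have eN : (k.+1)%:R = k%:R + 1 :> R by rewrite -natr1.
  rewrite eN in lk.
  have f1 : ln th * (k%:R + 1) <= (th - 1) * (k%:R + 1) by apply: ler_wpM2r => //; lra.
  have f2 : (k%:R + 1) * (7 / 8) <= (k%:R + 1) * (1 - th) by apply: ler_wpM2l; lra.
  have Lpos : 0 < - ln ka by lra.
  have nL : `|ln ka| = - ln ka by rewrite ler0_norm //; lra.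
  have gab' := gab; rewrite nL mul1r in gab'.
  have gL : ga * (- ln ka) <= 1.
    by have := ler_wpM2r (ltW Lpos) gab'; rewrite mulVf ?gt_eqF.
  have kL : k%:R <= 2 * (- ln ka) by lra.
  have := ler_wpM2l g0 kL; lra.
lra.
Qed.

Lemma final t : ka <= t <= 1 ->
  H t + h t <= ((1 + 6 * cc) * Dp * expR (18 * cc * (C0 * (S1 + S2 + 2)))) * (H 1 + h 1).
Proof.
move=> /andP[kt t1].
have [pn le1 dec dbl] := thfacts.
have c1 := cc1; have C1 := C01; have k0 := ka0; have t0 := th0; have t8 := th8.
have [H10 h10] := Hh0 1 ltac:(by rewrite ltr01 lexx).
have S10 : 0 <= S1 by have := hS1 0; rewrite big_ord0.
have S20 : 0 <= S2 by have := hS2 0; rewrite big_ord0.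
have D0 : 0 <= Dp.
  by rewrite /Dp; apply: mulr_ge0; [apply: addr_ge0; rewrite ?ler0n // | apply: exprn_ge0; exact: le_trans ler01 C1].
have KE k : (k == 0)%N || (ka <= th ^+ k.+1) ->
    KK * expR (18 * cc * \sum_(j < k) EE j) <=
    ((1 + 6 * cc) * Dp * expR (18 * cc * (C0 * (S1 + S2 + 2)))) * (H 1 + h 1).
  move=> hk.
  have e1 : \sum_(j < k) EE j <= C0 * (S1 + S2 + 2).
    case/orP: hk => [/eqP -> | hk]; last exact: sum_bound.
    by rewrite big_ord0; apply: mulr_ge0; [exact: le_trans ler01 C1 | lra].
  have e2 : expR (18 * cc * \sum_(j < k) EE j) <= expR (18 * cc * (C0 * (S1 + S2 + 2))).
    by rewrite ler_expR; apply: ler_wpM2l => //; apply: mulr_ge0 => //; exact: le_trans ler01 c1.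
  have c6 : 0 <= 1 + 6 * cc by lra.
  have KK0 : 0 <= KK by rewrite /KK /AA; apply: mulr_ge0; [apply: mulr_ge0|lra].
  apply: le_trans (ler_wpM2l KK0 e2) _.
  by rewrite /KK /AA mulrAC.
case: (leP th t) => tth.
  have [a [a' [b [[a0 a'0 b0] _ W0 Hb V]]]] := claim 0 isT.
  have Ht := W0 t kt ltac:(by rewrite expr1) ltac:(by rewrite expr0).
  have ht := Hb t kt ltac:(by apply: le_trans tth; rewrite expr2; nra) t1.
  have := KE 0%N isT.
  have f1 : 0 <= cc * a by apply: mulr_ge0; lra.
  have f2 : 0 <= (cc - 1) * a' by apply: mulr_ge0; lra.
  lra.
have tp : 0 < t by exact: lt_le_trans kt.
have ex := @geo_small R th t t0 ltac:(lra) tp.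
case: (ex_minnP ex) => n hn hmin.
case: n hn hmin => [|[|k]] hn hmin.
- by move: hn; rewrite expr0 => ?; lra.
- by move: hn; rewrite expr1 => ?; lra.
case: (leP (th ^+ k.+1) t) => tk.
  by have := hmin _ tk; rewrite ltnn.
have hk : (k == 0)%N || (ka <= th ^+ k.+1) by rewrite (le_trans kt (ltW tk)) orbT.
have [a [a' [b [[a0 a'0 b0] W1 _ Hb V]]]] := claim k hk.
have Ht := W1 t kt hn (ltW tk).
have ht := Hb t kt hn t1.
have := KE k hk.
have f1 : 0 <= (cc - 1) * a by apply: mulr_ge0; lra.
have f2 : 0 <= cc * a' by apply: mulr_ge0; lra.
lra.
Qed.
End Main.

Theorem lemma4p9 (R : realType) :
  exists c0 : R -> R,
    (forall x, 1 <= x -> 0 < c0 x) /\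
    (forall x y, 1 <= x -> x <= y -> c0 y <= c0 x) /\
    forall (C0 theta : R) (w1 w2 : R -> R),
      1 <= C0 -> 0 < theta < 1 / 8 ->
      admissible_modulus w1 -> admissible_modulus w2 ->
      exists C : R,
        forall (kappa gamma : R) (H h : R -> R),
          0 < kappa < 1 / 4 -> 0 <= gamma ->
          (forall x, 0 < x <= 1 -> 0 <= H x /\ 0 <= h x) ->
          {within [set` `]0, 1]], continuous H} ->
          {within [set` `]0, 1]], continuous h} ->
          (forall r, kappa <= r <= 1 / 2 ->
             [/\ (forall t, r <= t <= 2 * r -> H t <= C0 * H (2 * r)),
                 (forall t s, r <= t <= 2 * r -> r <= s <= 2 * r ->
                     `|h t - h s| <= C0 * H (2 * r)) &
                 H (theta * r) <= 1 / 2 * H r +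
                   C0 * (w1 (kappa / r) + w2 r + gamma) * (H (2 * r) + h (2 * r))]) ->
          gamma <= c0 C0 * `|ln kappa|^-1 ->
          forall r, kappa <= r <= 1 -> H r + h r <= C * (H 1 + h 1).
Proof.
exists (fun _ => 1); split; first by move=> *; exact: ltr01.
split; first by move=> *; exact: lexx.
move=> C0 th w1 w2 C01 /andP[th0 th8] aw1 aw2.
have th1 : 0 < th < 1 by rewrite th0 /=; lra.
have [S1 hS1] := @mod_sum R w1 th aw1 th1.
have [S2 hS2] := @mod_sum R w2 th aw2 th1.
case: aw1 => w10 w1nd _ _; case: aw2 => w20 w2nd _ _.
have [m hm] : exists m : nat, 1 <= th * 2 ^+ m.
  have h0 : 0 <= th^-1 by rewrite invr_ge0 ltW.
  have := archi_boundP h0; set N := Num.Def.archi_bound _ => hN.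
  exists N.
  have h2 : (N%:R : R) <= 2 ^+ N by rewrite -natrX ler_nat ltnW // ltn_expl.
  have : th * th^-1 <= th * 2 ^+ N by rewrite ler_pM2l //; apply: ltW (lt_le_trans hN h2).
  by rewrite mulfV ?gt_eqF.
exists ((1 + 6 * cc R C0 m) * Dp R C0 m * expR (18 * cc R C0 m * (C0 * (S1 + S2 + 2)))).
move=> kappa gamma H h /andP[ka0 ka4] ga0 Hh0 _ _ hyp gab r hr.
exact: (@final R C0 th kappa gamma w1 w2 H h C01 th0 th8 ka0 ka4 Hh0 hyp ga0 w10 w1nd w20 w2nd m hm S1 S2 hS1 hS2 gab r hr).
Qed.
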